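(* Let $a,b,u$ be positive integers. In coordinates $(i,j)$ with $i$ the row index (increasing downward, so ''north'' means decreasing $i$) and $j$ the column index (increasing eastward), a path means a lattice path with unit steps going east $(0,1)$ or north $(-1,0)$ from its SW endpoint to its NE endpoint, paths are nonintersecting if they share no vertex, and a diagonal chain of size $s$ is a set $\{(i_1,j_1),\dots,(i_s,j_s)\}$ with $i_1<\dots<i_s$ and $j_1<\dots<j_s$. (i) Assume $u\le\min(a,b)$. Let $X_p=(a-u+p,p)$ and $Y_p=(p,b-u+p)$ for $1\le p\le u$, let $R_{\rm hex}\subseteq\mathbb{R}^2$ be the closed hexagon with vertices $(1,1),X_1,X_u,(a,b),Y_u,Y_1$, and let $C\subseteq R_{\rm hex}\cap\mathbb{Z}^2$. Then there exists a collection of $u$ nonintersecting paths $H_1,\dots,H_u$, $H_p$ with endpoints $X_p$ and $Y_p$, whose union contains $C$, if and only if all diagonal chains in $C$ have size $\le u$. For (ii) and (ii') assume $C\subseteq([1,a]\times[1,b])\cap\mathbb{Z}^2$. (ii) If $u<a$, then there exists a collection of $u$ nonintersecting paths, the $p$-th with endpoints $(a-u+p,1)$ and $(p,b)$ ($1\le p\le u$), whose union contains $C$, if and only if $u\le b$ and all diagonal chains of $C$ have size $\le u$. If $u=a$, then (regardless of $b$) there exists a unique collection of $u$ nonintersecting paths, the $p$-th with endpoints $(a-u+p,1)$ and $(p,b)$, whose union contains $C$, and each of these paths is straight horizontal. (ii') If $u<b$, then there exists a collection of $u$ nonintersecting paths, the $q$-th with endpoints $(1,b-u+q)$ and $(a,q)$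 ($1\le q\le u$), whose union contains $C$, if and only if $u\le a$ and all diagonal chains of $C$ have size $\le u$. If $u=b$, then (regardless of $a$) there exists a unique collection of $u$ nonintersecting paths, the $q$-th with endpoints $(1,b-u+q)$ and $(a,q)$, whose union contains $C$, and each of these paths is straight vertical.
   Context: A path is straight horizontal if it contains no vertical edge and straight vertical if it contains no horizontal edge. All paths are in the lattice $\mathbb{Z}^2$ (for (ii), (ii') inside the grid $[1,a]\times[1,b]$). *)

(* Defs.v *)
(* Lattice points are pairs of integers (i, j):
   i = row index (increasing downward, "north" = decreasing i),
   j = column index (increasing eastward). *)
From mathcomp Require Import all_boot all_order all_algebra.
Set Implicit Arguments. Unset Strict Implicit. Unset Printing Implicit Defensive.
Import Order.TTheory GRing.Theory Num.Theory.
Local Open Scope ring_scope.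

Definition pt := (int * int)%type.

Definition lstep (x y : pt) : bool :=
  (y == (x.1, x.2 + 1)) || (y == (x.1 - 1, x.2)).

Definition lpath (sw ne : pt) (P : seq pt) : bool :=
  if P is x :: r then [&& x == sw, path lstep x r & last x r == ne] else false.

Definition nonintersecting (u : nat) (H : nat -> seq pt) : Prop :=
  forall p q : nat, (1 <= p <= u)%N -> (1 <= q <= u)%N -> p <> q ->
    forall v : pt, v \in H p -> v \in H q -> False.

Definition path_family (u : nat) (sw ne : nat -> pt) (H : nat -> seq pt) : Prop :=
  (forall p : nat, (1 <= p <= u)%N -> lpath (sw p) (ne p) (H p)) /\ nonintersecting u H.

Definition covers (u : nat) (H : nat -> seq pt) (C : pt -> Prop) : Prop :=
  forall v : pt, C v -> exists2 p : nat, (1 <= p <= u)%N & v \in H p.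

Definition diag_lt (x y : pt) : bool := (x.1 < y.1) && (x.2 < y.2).

Definition diag_chain (C : pt -> Prop) (c : seq pt) : Prop :=
  (forall v : pt, v \in c -> C v) /\ sorted diag_lt c.

Definition chains_le (C : pt -> Prop) (u : nat) : Prop :=
  forall c : seq pt, diag_chain C c -> (size c <= u)%N.

Definition straight_horizontal (P : seq pt) : bool :=
  if P is x :: r then path (fun v w : pt => v.1 == w.1) x r else true.
Definition straight_vertical (P : seq pt) : bool :=
  if P is x :: r then path (fun v w : pt => v.2 == w.2) x r else true.

Definition hex_verts (a b u : nat) : seq pt :=
  [:: (1, 1); (a%:Z - u%:Z + 1, 1); (a%:Z, u%:Z); (a%:Z, b%:Z);
      (u%:Z, b%:Z); (1, b%:Z - u%:Z + 1)].

(* v lies in the closed hexagon = convex hull of its vertices (the hexagon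
   is convex); weights taken rational, which gives the same lattice points
   as real weights since the vertices are lattice points *)
Definition in_hexagon (a b u : nat) (v : pt) : Prop :=
  exists w : nat -> rat,
    (forall k, 0 <= w k) /\ \sum_(k < 6) w k = 1 /\
    \sum_(k < 6) w k * ((nth (0, 0) (hex_verts a b u) k).1)%:~R = (v.1)%:~R /\
    \sum_(k < 6) w k * ((nth (0, 0) (hex_verts a b u) k).2)%:~R = (v.2)%:~R.

Definition in_grid (a b : nat) (v : pt) : Prop :=
  (1 <= v.1 <= a%:Z) /\ (1 <= v.2 <= b%:Z).

Definition hexX (a u : nat) (p : nat) : pt := (a%:Z - u%:Z + p%:Z, p%:Z).
Definition hexY (b u : nat) (p : nat) : pt := (p%:Z, b%:Z - u%:Z + p%:Z).
Definition rowSW (a u : nat) (p : nat) : pt := (a%:Z - u%:Z + p%:Z, 1).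
Definition rowNE (b : nat) (p : nat) : pt := (p%:Z, b%:Z).
Definition colSW (a : nat) (q : nat) : pt := (a%:Z, q%:Z).
Definition colNE (b u : nat) (q : nat) : pt := (1, b%:Z - u%:Z + q%:Z).

(* Main.v *)
Require Import Defs.
From mathcomp Require Import all_boot all_order all_algebra.
From mathcomp Require Import zify ring.
From Stdlib Require Import ClassicalEpsilon Classical.
Set Implicit Arguments. Unset Strict Implicit. Unset Printing Implicit Defensive.
Import Order.TTheory GRing.Theory Num.Theory.
Local Open Scope ring_scope.

Definition reach (x y : pt) : Prop := y.1 <= x.1 /\ x.2 <= y.2.

Lemma lstep_reach x y : lstep x y -> reach x y.
Proof. by rewrite /lstep /reach => /orP[] /eqP ->; simpl; lia. Qed.

Lemma path_reach_first x r : path lstep x r -> forall y, y \in x :: r -> reach x y.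
Proof.
elim: r x => [|z r IH] x /=.
  by move=> _ y; rewrite inE => /eqP ->; rewrite /reach; lia.
move=> /andP[hxz hp] y; rewrite inE => /orP[/eqP ->|hy]; first by rewrite /reach; lia.
have := IH z hp y hy; have := lstep_reach hxz; rewrite /reach; lia.
Qed.

Lemma path_reach_last x r : path lstep x r -> forall y, y \in x :: r -> reach y (last x r).
Proof.
elim: r x => [|z r IH] x /=.
  by move=> _ y; rewrite inE => /eqP ->; rewrite /reach; lia.
move=> /andP[hxz hp] y; rewrite inE => /orP[/eqP ->|hy]; last exact: IH.
have := IH z hp z (mem_head _ _); have := lstep_reach hxz; rewrite /reach; lia.
Qed.

Lemma path_comparable x r : path lstep x r -> forall y z, y \in x::r -> z \in x::r ->
  reach y z \/ reach z y.
Proof.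
elim: r x => [|w r IH] x /=.
  move=> _ y z; rewrite !inE => /eqP -> /eqP ->; left; rewrite /reach; lia.
move=> /andP[hxw hp] y z; rewrite in_cons => /orP[/eqP ->|hy]; rewrite in_cons => /orP[/eqP ->|hz].
- left; rewrite /reach; lia.
- left; apply: (path_reach_first (x:=x) (r:=w::r)); [by rewrite /= hxw | by rewrite in_cons hz orbT].
- right; apply: (path_reach_first (x:=x) (r:=w::r)); [by rewrite /= hxw | by rewrite in_cons hy orbT].
- exact: (IH w hp y z hy hz).
Qed.

Lemma path_no_diag x r y z : path lstep x r -> y \in x::r -> z \in x::r -> ~~ diag_lt y z.
Proof.
move=> hp hy hz; rewrite /diag_lt; apply/negP => /andP[h1 h2].
case: (path_comparable hp hy hz); rewrite /reach; lia.
Qed.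

Lemma lpath_box sw ne P v : lpath sw ne P -> v \in P ->
  [/\ ne.1 <= v.1, v.1 <= sw.1, sw.2 <= v.2 & v.2 <= ne.2].
Proof.
case: P => [//|x r] /= /and3P[/eqP hx hp /eqP hl] hv.
have := path_reach_first hp hv; have := path_reach_last hp hv.
rewrite hl hx /reach => -[? ?] [? ?]; split; lia.
Qed.

Lemma lpath_ivt sw ne P d : lpath sw ne P -> ne.1 - ne.2 <= d -> d <= sw.1 - sw.2 ->
  exists2 v, v \in P & v.1 - v.2 = d.
Proof.
case: P => [//|x r] /= /and3P[/eqP -> hp /eqP hl]; clear x.
elim: r sw hp hl => [|w r IH] x /= hp hl h1 h2.
  by exists x; rewrite ?mem_head //; rewrite -hl in h1; lia.
case/andP: hp => hxw hp.
have [e|hne] := eqVneq d (x.1 - x.2); first by exists x; rewrite ?mem_head.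
have hw : w.1 - w.2 = x.1 - x.2 - 1.
  by move: hxw; rewrite /lstep => /orP[] /eqP ->; simpl; lia.
have [v hv hd] := IH w hp hl h1 (ltac:(move: hne; rewrite hw; lia)).
by exists v => //; rewrite inE hv orbT.
Qed.

Fixpoint vseg (r j : int) (m : nat) : seq pt :=
  (r, j) :: (if m is m'.+1 then vseg (r - 1) j m' else [::]).

Lemma vseg_path r j m x : lstep x (r, j) ->
  path lstep x (vseg r j m) /\ last x (vseg r j m) = (r - m%:Z, j).
Proof.
elim: m r x => [|m IH] r x hx /=; first by rewrite hx; split=> //; congr pair; lia.
have h : lstep (r, j) (r - 1, j) by rewrite /lstep /= eqxx orbT.
have [h1 h2] := IH (r - 1) (r, j) h.
by rewrite hx h1 h2; split => //; congr pair; lia.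
Qed.

Lemma vseg_mem r j m (v : pt) : v \in vseg r j m <-> v.2 = j /\ r - m%:Z <= v.1 <= r.
Proof.
case: v => v1 v2 /=.
elim: m r => [|m IH] r /=.
  rewrite inE; split; first by move/eqP => [-> ->]; split=> //; apply/andP; split; lia.
  move=> [-> /andP[h1 h2]]; apply/eqP; congr pair; lia.
rewrite in_cons; split.
  case/orP=> [/eqP [-> ->]|/IH[-> /andP[h1 h2]]]; split=> //; apply/andP; split; lia.
move=> [e2 /andP[h1 h2]].
have [e|ne] := eqVneq v1 r; first by rewrite e e2 eqxx.
by apply/orP; right; apply/(IH (r - 1)); split=> //; apply/andP; split; lia.
Qed.

Fixpoint stairF (r j : int) (f : nat -> int) (n : nat) : seq pt :=
  match n with
  | 0 => vseg r j `|r - f 0%N|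
  | n'.+1 => vseg r j `|r - f 0%N| ++ stairF (f 0%N) (j + 1) (fun k => f k.+1) n'
  end.

Lemma stair_path n r j f x : f 0%N <= r -> (forall k, (k < n)%N -> f k.+1 <= f k) ->
  lstep x (r, j) ->
  path lstep x (stairF r j f n) /\ last x (stairF r j f n) = (f n, j + n%:Z).
Proof.
elim: n r j f x => [|n IH] r j f x h0 hk hx /=.
  have [h1 h2] := vseg_path `|r - f 0%N| hx; split=> //; rewrite h2; congr pair; lia.
have [h1 h2] := vseg_path `|r - f 0%N| hx.
have e : (r - `|r - f 0%N|%:Z, j) = (f 0%N, j) by congr pair; lia.
have hs : lstep (f 0%N, j) (f 0%N, j + 1) by rewrite /lstep /= eqxx.
have [h3 h4] := IH (f 0%N) (j + 1) (fun k => f k.+1) (f 0%N, j) (hk 0%N isT)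
  (fun k hk' => hk k.+1 hk') hs.
rewrite cat_path last_cat h1 h2 e h3 h4; split=> //; congr pair; lia.
Qed.

Lemma stair_mem n r j f (v : pt) : f 0%N <= r -> (forall k, (k < n)%N -> f k.+1 <= f k) ->
  v \in stairF r j f n <->
  exists k, [/\ (k <= n)%N, v.2 = j + k%:Z, f k <= v.1 & v.1 <= (if k is k'.+1 then f k' else r)].
Proof.
elim: n r j f => [|n IH] r j f h0 hk /=.
  rewrite vseg_mem; split.
    case=> h1 /andP[h2 h3]; exists 0%N; split; try done; lia.
  case=> -[|k] [] //= _ h1 h2 h3; split; first lia.
  apply/andP; split; lia.
rewrite mem_cat; split.
  case/orP.
    rewrite vseg_mem => -[h1 /andP[h2 h3]]; exists 0%N; split; try done; lia.
  rewrite IH; try (by apply: (hk 0%N)); try (by move=> k0 hk0; apply: hk).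
  case=> k [h1 h2 h3 h4]; exists k.+1; split; try done; first lia.
  by case: k h1 h2 h3 h4.
case=> -[|k] [h1 h2 h3 h4].
  by apply/orP; left; rewrite vseg_mem; split; [lia|apply/andP; split; lia].
apply/orP; right; rewrite IH; try (by apply: (hk 0%N)); try (by move=> k0 hk0; apply: hk).
exists k; split; try done; first lia.
by case: k h1 h2 h3 h4.
Qed.

Lemma diag_trans : transitive diag_lt.
Proof. move=> y x z; rewrite /diag_lt => /andP[h1 h2] /andP[h3 h4]; apply/andP; split; lia. Qed.

Lemma diag_irr : irreflexive diag_lt.
Proof. by move=> x; rewrite /diag_lt ltxx. Qed.

Definition G (D : pt -> Prop) (p : nat) (v : pt) : Prop :=
  exists c : seq pt, [/\ (forall w : pt, w \in c -> D w /\ (w.1 <= v.1 /\ w.2 <= v.2)),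
    sorted diag_lt c & (p <= size c)%N].

Lemma G_mono D p (v w : pt) : G D p v -> v.1 <= w.1 -> v.2 <= w.2 -> G D p w.
Proof.
move=> [c [h1 h2 h3]] e1 e2; exists c; split=> // x hx.
have [hD [? ?]] := h1 x hx; split=> //; split; lia.
Qed.

Lemma G_le D p q v : (q <= p)%N -> G D p v -> G D q v.
Proof. move=> hqp [c [h1 h2 h3]]; exists c; split=> //; exact: leq_trans h3. Qed.

Lemma sorted_rconsE (c : seq pt) (x : pt) :
  sorted diag_lt (rcons c x) = sorted diag_lt c && all (fun y => diag_lt y x) c.
Proof.
rewrite !(sorted_pairwise diag_trans) -cats1 pairwise_cat allrel1r /=.
by rewrite andbT andbC.
Qed.

Lemma G_diag D p (v : pt) : G D p.+1 (v.1 + 1, v.2 + 1) -> G D p v.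
Proof.
move=> [c [h1 h2 h3]].
case/lastP: c h1 h2 h3 => [//|c x] h1 h2 h3.
move: h2; rewrite sorted_rconsE => /andP[hs ha].
exists c; split=> //; last by move: h3; rewrite size_rcons.
move=> y hy; have [hD [e1 e2]] := h1 y (ltac:(by rewrite mem_rcons inE hy orbT)).
have := allP ha y hy; have [_ [f1 f2]] := h1 x (ltac:(by rewrite mem_rcons mem_head)).
rewrite /diag_lt /= => /andP[g1 g2]; split=> //; simpl in *; split; lia.
Qed.

Lemma G_ext D p (c : pt) : D c -> G D p (c.1 - 1, c.2 - 1) -> G D p.+1 c.
Proof.
move=> hc [s [h1 h2 h3]]; exists (rcons s c); split.
- move=> w; rewrite mem_rcons inE => /orP[/eqP ->|hw]; first by split=> //; split; lia.
  have [hD [e1 e2]] := h1 w hw; simpl in *; split=> //; split; lia.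
- rewrite sorted_rconsE h2 /=; apply/allP => y hy.
  have [_ [e1 e2]] := h1 y hy; rewrite /diag_lt; apply/andP; simpl in *; split; lia.
- by rewrite size_rcons.
Qed.

Lemma chain_count (key : pt -> int) (c : seq pt) (lo hi : int) :
  (forall x y, diag_lt x y -> key x < key y) -> sorted diag_lt c ->
  (forall w : pt, w \in c -> lo <= key w <= hi) ->
  (size c == 0)%N || (lo + (size c)%:Z <= hi + 1).
Proof.
move=> hk; elim: c lo => [//|x c IH] lo /= hs hw.
have hx := hw x (mem_head _ _).
have hall := order_path_min diag_trans hs.
have := IH (key x + 1) (path_sorted hs).
have H : forall w : pt, w \in c -> key x + 1 <= key w <= hi.
  move=> w hwc; have := hw w (ltac:(by rewrite inE hwc orbT)).
  have := hk _ _ (allP hall w hwc); lia.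
move=> h; case/orP: (h H) => [/eqP e|e]; rewrite ?e; lia.
Qed.

Lemma G_count (key : pt -> int) D p (v : pt) (lo hi : int) :
  (forall x y, diag_lt x y -> key x < key y) -> (0 < p)%N -> G D p v ->
  (forall w : pt, D w -> w.1 <= v.1 -> w.2 <= v.2 -> lo <= key w <= hi) ->
  lo + p%:Z <= hi + 1.
Proof.
move=> hk hp [c [h1 h2 h3]] hb.
have := chain_count hk h2 (lo := lo) (hi := hi).
have H : forall w : pt, w \in c -> lo <= key w <= hi.
  by move=> w hw; have [hD [e1 e2]] := h1 w hw; apply: hb.
move=> /(_ H) /orP[/eqP e|h]; first by move: h3; rewrite e; lia.
lia.
Qed.

Lemma key1 : forall x y, diag_lt x y -> x.1 < y.1.
Proof. by move=> x y /andP[]. Qed.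
Lemma key2 : forall x y, diag_lt x y -> x.2 < y.2.
Proof. by move=> x y /andP[]. Qed.

Lemma chain_split (c : seq pt) (x : pt) : sorted diag_lt c -> x \in c ->
  exists c1 c2, [/\ c = c1 ++ x :: c2, sorted diag_lt c1, sorted diag_lt c2,
     (forall y : pt, y \in c1 -> diag_lt y x) & (forall y : pt, y \in c2 -> diag_lt x y)].
Proof.
move=> hs hx; case/splitPr: hx hs => c1 c2 hs; exists c1, c2.
have: pairwise diag_lt (c1 ++ x :: c2) by rewrite -(sorted_pairwise diag_trans).
rewrite pairwise_cat pairwise_cons.
move=> /and3P[ha hp1 /andP[hx hp2]].
split=> //; try by rewrite (sorted_pairwise diag_trans).
- by move=> y hy; move/allrelP: ha; apply=> //; rewrite mem_head.
- by move=> y hy; apply: (allP hx).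
Qed.

Lemma exists_rank (P : nat -> Prop) u : P 1%N -> ~ P u.+1 ->
  exists p, [/\ (1 <= p <= u)%N, P p & ~ P p.+1].
Proof.
elim: u => [|u IH] h1 hu; first by [].
case: (classic (P u.+1)) => hPu.
  by exists u.+1; split=> //; rewrite leqnn andbT.
have [p [hp1 hp2 hp3]] := IH h1 hPu; exists p; split=> //; lia.
Qed.

Lemma int_thresh (P : int -> Prop) x (n : nat) : ~ P x -> P (x + n%:Z) ->
  exists i, P i /\ ~ P (i - 1).
Proof.
elim: n => [|n IH] h0 hn; first by move: hn; rewrite addr0.
case: (classic (P (x + n%:Z))) => h; first exact: IH.
by exists (x + n.+1%:Z); split=> //; have -> : x + n.+1%:Z - 1 = x + n%:Z by lia.
Qed.

Definition thr (D : pt -> Prop) (p : nat) (j : int) : int :=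
  epsilon (inhabits 0) (fun i => G D p (i, j) /\ ~ G D p (i - 1, j)).

Lemma G_low D p (L x j : int) : (forall w : pt, D w -> L <= w.1) -> (0 < p)%N ->
  G D p (x, j) -> L <= x.
Proof.
move=> hL hp hG.
have := G_count (key := fst) key1 hp hG (lo := L) (hi := x).
have H : forall w : pt, D w -> w.1 <= (x, j).1 -> w.2 <= (x, j).2 -> L <= w.1 <= x.
  by move=> w hw e1 e2; apply/andP; split; [exact: hL|exact: e1].
move=> /(_ H); lia.
Qed.

Lemma thr_spec D p (L x j : int) : (forall w : pt, D w -> L <= w.1) -> (0 < p)%N ->
  G D p (x, j) -> G D p (thr D p j, j) /\ ~ G D p (thr D p j - 1, j).
Proof.
move=> hL hp hG; rewrite /thr; apply: (epsilon_spec (inhabits 0) (fun i => G D p (i, j) /\ ~ G D p (i - 1, j))).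
have hx := G_low hL hp hG.
have hn : ~ G D p (L - 1, j) by move/(G_low hL hp); lia.
have := @int_thresh (fun i => G D p (i, j)) (L - 1) (absz (x - (L - 1))%R) hn.
have -> : L - 1 + (absz (x - (L - 1))%R)%:Z = x by lia.
by move/(_ hG).
Qed.

Lemma thr_char D p (L x j i : int) : (forall w : pt, D w -> L <= w.1) -> (0 < p)%N ->
  G D p (x, j) -> G D p (i, j) <-> thr D p j <= i.
Proof.
move=> hL hp hG; have [h1 h2] := thr_spec hL hp hG; split.
  move=> hi; case: (lerP (thr D p j) i) => // hlt; exfalso; apply: h2.
  by apply: G_mono hi _ _ => /=; lia.
by move=> hle; apply: G_mono h1 _ _ => /=; lia.
Qed.

Definition fp D (S E : nat -> pt) (p : nat) (k : nat) : int :=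
  if (k < (absz ((E p).2 - (S p).2)%R))%N then thr D p ((S p).2 + k%:Z) else (E p).1.

Definition Hc D (S E : nat -> pt) (p : nat) : seq pt :=
  stairF (S p).1 (S p).2 (fp D S E p) (absz ((E p).2 - (S p).2)%R).

Definition onH D p (v : pt) := G D p v /\ ~ G D p (v.1 - 1, v.2 - 1).

Lemma vseg_head r j m : exists rest, vseg r j m = (r, j) :: rest.
Proof. by case: m => [|m] /=; eexists. Qed.

Lemma stair_head r j f n : exists rest, stairF r j f n = (r, j) :: rest.
Proof.
have [rest hr] := vseg_head r j (absz (r - f 0%N)%R).
by case: n => [|n] /=; rewrite hr; eexists.
Qed.

Lemma core_path D (S E : nat -> pt) (L : int) p :
  (forall w : pt, D w -> L <= w.1) -> (0 < p)%N ->
  G D p (S p) -> ~ G D p ((S p).1 - 1, (S p).2 - 1) ->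
  G D p (E p) -> ~ G D p ((E p).1 - 1, (E p).2 - 1) ->
  (S p).2 <= (E p).2 -> (E p).1 <= (S p).1 ->
  [/\ lpath (S p) (E p) (Hc D S E p),
      (forall v : pt, v \in Hc D S E p -> onH D p v) &
      (forall c : pt, onH D p c -> (S p).2 <= c.2 -> c.2 <= (E p).2 ->
         (c.2 = (S p).2 -> c.1 <= (S p).1) -> (c.2 = (E p).2 -> (E p).1 <= c.1) ->
         c \in Hc D S E p)].
Proof.
move=> hL hp hS1 hS2 hE1 hE2 hSE1 hSE2.
have hGs : forall j, (S p).2 <= j -> G D p ((S p).1, j).
  by move=> j hj; apply: G_mono hS1 _ _ => /=; lia.
have tspec : forall j, (S p).2 <= j -> G D p (thr D p j, j) /\ ~ G D p (thr D p j - 1, j).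
  by move=> j hj; apply: (thr_spec hL hp (hGs j hj)).
have tchar : forall j i, (S p).2 <= j -> (G D p (i, j) <-> thr D p j <= i).
  by move=> j i hj; apply: (thr_char _ hL hp (hGs j hj)).
have tle : forall j, (S p).2 <= j -> thr D p j <= (S p).1.
  by move=> j hj; apply/(tchar j (S p).1 hj)/hGs.
have tdec : forall j, (S p).2 <= j -> thr D p (j + 1) <= thr D p j.
  move=> j hj; apply/(tchar (j + 1) _ (ltac:(lia))).
  by apply: G_mono (proj1 (tspec j hj)) _ _ => /=; lia.
have fdef : forall k, fp D S E p k = if (k < (absz ((E p).2 - (S p).2)%R))%N then thr D p ((S p).2 + k%:Z) else (E p).1 by [].
have h0 : fp D S E p 0%N <= (S p).1.
  rewrite fdef; case: ifP => _; [apply: tle; lia | exact: hSE2].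
have hk : forall k, (k < (absz ((E p).2 - (S p).2)%R))%N -> fp D S E p k.+1 <= fp D S E p k.
  move=> k hkn; rewrite !fdef hkn; case: ifP => hk1.
    have -> : (S p).2 + k.+1%:Z = (S p).2 + k%:Z + 1 by lia.
    by apply: tdec; lia.
  have ek : (S p).2 + k%:Z = (E p).2 - 1 by lia.
  have [g1 g2] := tspec ((S p).2 + k%:Z) (ltac:(lia)).
  case: (lerP (E p).1 (thr D p ((S p).2 + k%:Z))) => // hlt; exfalso; apply: hE2.
  by apply: G_mono g1 _ _ => /=; lia.
have hmem := fun v : pt => stair_mem (S p).2 v h0 hk.
split.
- have hx : lstep ((S p).1 + 1, (S p).2) ((S p).1, (S p).2).
    by rewrite /lstep /=; apply/orP; right; apply/eqP; congr pair; lia.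
  have [hpa hla] := stair_path h0 hk hx.
  rewrite /Hc in hpa hla *.
  have [rest hr] := stair_head (S p).1 (S p).2 (fp D S E p) (absz ((E p).2 - (S p).2)%R).
  rewrite hr /= in hpa hla *; case/andP: hpa => _ hpa.
  apply/and3P; split=> //.
    by apply/eqP; rewrite [in RHS](surjective_pairing (S p)).
  apply/eqP; rewrite hla fdef ltnn [in RHS](surjective_pairing (E p)); congr pair; lia.
- move=> v; rewrite /Hc => /hmem [k [hkn hv2 hf ht]].
  split.
    move: hf; rewrite fdef; case: ifP => hkn' hf.
      have [g1 _] := tspec ((S p).2 + k%:Z) (ltac:(lia)).
      by apply: G_mono g1 _ _ => /=; lia.
    by apply: G_mono hE1 _ _ => /=; lia.
  case: k hkn hv2 hf ht => [|k] hkn hv2 hf ht.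
    by move=> hG; apply: hS2; apply: G_mono hG _ _ => /=; lia.
  move: ht; rewrite fdef; case: ifP => hkn' ht; last by exfalso; lia.
  have [_ g2] := tspec ((S p).2 + k%:Z) (ltac:(lia)).
  by move=> hG; apply: g2; apply: G_mono hG _ _ => /=; lia.
- move=> c [hc1 hc2] e1 e2 e3 e4; rewrite /Hc; apply/hmem.
  exists (absz (c.2 - (S p).2)%R); split; [lia|lia| |].
    rewrite fdef; case: ifP => hkn.
      have -> : (S p).2 + (absz (c.2 - (S p).2)%R)%:Z = c.2 by lia.
      apply/(tchar c.2 c.1 e1).
      by apply: G_mono hc1 _ _ => /=; lia.
    by apply: e4; lia.
  case hk0 : (absz (c.2 - (S p).2)%R) => [|k]; first by apply: e3; lia.
  rewrite fdef; case: ifP => hkn; last by exfalso; lia.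
  have [g1 _] := tspec ((S p).2 + k%:Z) (ltac:(lia)).
  case: (lerP c.1 (thr D p ((S p).2 + k%:Z))) => // hlt; exfalso; apply: hc2.
  by apply: G_mono g1 _ _ => /=; lia.
Qed.

Lemma G0 D (v : pt) : G D 0 v.
Proof. by exists [::]; split. Qed.

Lemma onH_disj D p q (v : pt) : (p < q)%N -> onH D p v -> onH D q v -> False.
Proof.
move=> hpq [_ h] [hq _]; apply: h; apply: G_diag.
have := G_le hpq hq => hG; apply: G_mono hG _ _ => /=; lia.
Qed.

Lemma core u D (C : pt -> Prop) (S E : nat -> pt) (L : int) :
  (forall v, C v -> D v) -> chains_le D u -> (forall w : pt, D w -> L <= w.1) ->
  (forall p, (1 <= p <= u)%N -> [/\ G D p (S p), ~ G D p ((S p).1 - 1, (S p).2 - 1),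
      G D p (E p), ~ G D p ((E p).1 - 1, (E p).2 - 1) & ((S p).2 <= (E p).2 /\ (E p).1 <= (S p).1)]) ->
  (forall (c : pt) p, C c -> (1 <= p <= u)%N -> onH D p c ->
     [/\ (S p).2 <= c.2, c.2 <= (E p).2, (c.2 = (S p).2 -> c.1 <= (S p).1)
       & (c.2 = (E p).2 -> (E p).1 <= c.1)]) ->
  exists H, path_family u S E H /\ covers u H C.
Proof.
move=> hCD hch hL hSE h4.
have cp : forall p, (1 <= p <= u)%N -> [/\ lpath (S p) (E p) (Hc D S E p),
      (forall v : pt, v \in Hc D S E p -> onH D p v) &
      (forall c : pt, onH D p c -> (S p).2 <= c.2 -> c.2 <= (E p).2 ->
         (c.2 = (S p).2 -> c.1 <= (S p).1) -> (c.2 = (E p).2 -> (E p).1 <= c.1) ->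
         c \in Hc D S E p)].
  move=> p hp; have [a1 a2 a3 a4 [a5 a6]] := hSE p hp.
  by apply: (core_path hL) => //; case/andP: hp.
exists (Hc D S E); split; first split.
- by move=> p hp; case: (cp p hp).
- move=> p q hp hq hpq v hvp hvq.
  have [_ m1 _] := cp p hp; have [_ m2 _] := cp q hq.
  have o1 := m1 v hvp; have o2 := m2 v hvq.
  case: (ltngtP p q) => h.
  + exact: onH_disj h o1 o2.
  + exact: onH_disj h o2 o1.
  + by apply: hpq.
- move=> c hc.
  have hD := hCD c hc.
  have [p [hp hGp hnG]] := @exists_rank (fun p => G D p c) u
     (G_ext hD (G0 D _)) (ltac:(move=> [c0 [h1 h2 h3]];
        have := hch c0 (conj (fun w hw => (h1 w hw).1) h2); lia)).
  have ho : onH D p c by split=> // hG; apply: hnG; exact: G_ext hD hG.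
  exists p => //.
  have [_ _ m3] := cp p hp.
  have [e1 e2 e3 e4] := h4 c p hc hp ho.
  exact: m3.
Qed.

Lemma sorted_tot (c : seq pt) (x y : pt) : sorted diag_lt c -> x \in c -> y \in c -> x != y ->
  diag_lt x y \/ diag_lt y x.
Proof.
rewrite (sorted_pairwise diag_trans).
elim: c => [//|z c IH]; rewrite pairwise_cons => /andP[ha hp].
rewrite !in_cons => /orP[/eqP ->|hx] /orP[/eqP ->|hy] hne.
- by rewrite eqxx in hne.
- by left; apply: (allP ha).
- by right; apply: (allP ha).
- exact: IH.
Qed.

Lemma lpath_no_diag sw ne P (y z : pt) : lpath sw ne P -> y \in P -> z \in P -> ~~ diag_lt y z.
Proof. by case: P => [//|x r] /= /and3P[_ hp _]; apply: path_no_diag. Qed.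

Lemma chains_nec u (S E : nat -> pt) H (C : pt -> Prop) :
  path_family u S E H -> covers u H C -> chains_le C u.
Proof.
move=> [hl hni] hcov c [hcC hs].
pose pk (w : pt) := epsilon (inhabits 0%N) (fun p => (1 <= p <= u)%N /\ w \in H p).
have pks : forall w, w \in c -> (1 <= pk w <= u)%N /\ w \in H (pk w).
  move=> w hw; apply: (epsilon_spec (inhabits 0%N) (fun p => (1 <= p <= u)%N /\ w \in H p)).
  by have [p hp hwp] := hcov w (hcC w hw); exists p.
have hu : uniq c by apply: (sorted_uniq diag_trans diag_irr).
have hmu : uniq (map pk c).
  rewrite map_inj_in_uniq // => x y hx hy he.
  apply/eqP; apply/negP => /negP hne.
  have [hx1 hx2] := pks x hx; have [hy1 hy2] := pks y hy.
  rewrite he in hx2.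
  have hl' := hl _ hy1.
  case: (sorted_tot hs hx hy hne) => hd.
  + by move: (lpath_no_diag hl' hx2 hy2); rewrite hd.
  + by move: (lpath_no_diag hl' hy2 hx2); rewrite hd.
have := uniq_leq_size hmu (s2 := iota 1 u).
rewrite size_map size_iota; apply=> q /mapP [w hw ->].
by rewrite mem_iota; have [h1 _] := pks w hw; move: h1; lia.
Qed.

Lemma line_pigeon u (S E : nat -> pt) H (m : nat) (d : int) (key : pt -> int) (lo : int) (K : nat) :
  path_family u S E H -> (m <= u)%N ->
  (forall p, (1 <= p <= m)%N -> (E p).1 - (E p).2 <= d /\ d <= (S p).1 - (S p).2) ->
  (forall p (v : pt), (1 <= p <= m)%N -> v \in H p -> lo <= key v /\ key v < lo + K%:Z) ->
  (forall v w : pt, v.1 - v.2 = w.1 - w.2 -> key v = key w -> v = w) ->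
  (m <= K)%N.
Proof.
move=> [hl hni] hmu hd hk hinj.
pose vp (p : nat) := epsilon (inhabits ((0 : int), (0 : int))) (fun v : pt => v \in H p /\ v.1 - v.2 = d).
have vps : forall p, (1 <= p <= m)%N -> vp p \in H p /\ (vp p).1 - (vp p).2 = d.
  move=> p hp; apply: (epsilon_spec _ (fun v : pt => v \in H p /\ v.1 - v.2 = d)).
  have hpu : (1 <= p <= u)%N by move: hp hmu; lia.
  have [h1 h2] := hd p hp.
  by have [v hv hv'] := lpath_ivt (hl p hpu) h1 h2; exists v.
pose g p := absz (key (vp p) - lo).
have hgu : uniq (map g (iota 1 m)).
  rewrite map_inj_in_uniq ?iota_uniq // => p q; rewrite !mem_iota => hp hq he.
  have hp' : (1 <= p <= m)%N by move: hp; lia.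
  have hq' : (1 <= q <= m)%N by move: hq; lia.
  have [a1 a2] := vps p hp'; have [b1 b2] := vps q hq'.
  have [c1 c2] := hk p _ hp' a1; have [e1 e2] := hk q _ hq' b1.
  have ek : key (vp p) = key (vp q) by move: he; rewrite /g; lia.
  have ev : vp p = vp q by apply: hinj => //; rewrite a2 b2.
  case: (eqVneq p q) => // hne; exfalso.
  apply: (hni p q (ltac:(move: hp' hmu; lia)) (ltac:(move: hq' hmu; lia)) _ _ a1).
    by move=> e; rewrite e eqxx in hne.
  by rewrite ev.
have := uniq_leq_size hgu (s2 := iota 0 K).
rewrite size_map !size_iota; apply=> x /mapP [p hp ->].
rewrite mem_iota mem_iota in hp *.
have hp' : (1 <= p <= m)%N by move: hp; lia.
have [a1 _] := vps p hp'; have [c1 c2] := hk p _ hp' a1.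
rewrite /g; lia.
Qed.

Lemma hex_lin a b u (v : pt) (al be ga : int) :
  (forall k : 'I_6, al * (nth (0, 0) (hex_verts a b u) k).1 + be * (nth (0, 0) (hex_verts a b u) k).2 <= ga) ->
  in_hexagon a b u v -> al * v.1 + be * v.2 <= ga.
Proof.
move=> hk [w [hw [hs [hx hy]]]].
set X := fun k : 'I_6 => (nth (0, 0) (hex_verts a b u) k).1 in hx hk.
set Y := fun k : 'I_6 => (nth (0, 0) (hex_verts a b u) k).2 in hy hk.
have e : ((al * v.1 + be * v.2)%:~R : rat) = \sum_(k < 6) w k * (al * X k + be * Y k)%:~R.
  rewrite intrD !intrM -hx -hy !mulr_sumr -big_split /=; apply: eq_bigr => k _.
  rewrite intrD !intrM; ring.
rewrite -(ler_int rat) e.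
have h : \sum_(k < 6) w k * (al * X k + be * Y k)%:~R <= \sum_(k < 6) w k * (ga%:~R : rat).
  by apply: ler_sum => k _; apply: ler_wpM2l; [exact: hw|rewrite ler_int; exact: hk].
by apply: (le_trans h); rewrite -mulr_suml hs mul1r.
Qed.

Lemma hex_ineq a b u (v : pt) : (0 < u)%N -> (u <= minn a b)%N -> in_hexagon a b u v ->
  [/\ 1 <= v.1 <= a%:Z, 1 <= v.2 <= b%:Z, v.1 - v.2 <= a%:Z - u%:Z & v.2 - v.1 <= b%:Z - u%:Z].
Proof.
move=> hu hm hv.
have hma : (u <= a)%N by move: hm; rewrite leq_min => /andP[].
have hmb : (u <= b)%N by move: hm; rewrite leq_min => /andP[].
have L := fun al be ga H => @hex_lin a b u v al be ga H hv.
have c1 := L (-1) 0 (-1) (ltac:(case=> [[|[|[|[|[|[|k]]]]]] hk] //=; lia)).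
have c2 := L 1 0 a%:Z (ltac:(case=> [[|[|[|[|[|[|k]]]]]] hk] //=; lia)).
have c3 := L 0 (-1) (-1) (ltac:(case=> [[|[|[|[|[|[|k]]]]]] hk] //=; lia)).
have c4 := L 0 1 b%:Z (ltac:(case=> [[|[|[|[|[|[|k]]]]]] hk] //=; lia)).
have c5 := L 1 (-1) (a%:Z - u%:Z) (ltac:(case=> [[|[|[|[|[|[|k]]]]]] hk] //=; lia)).
have c6 := L (-1) 1 (b%:Z - u%:Z) (ltac:(case=> [[|[|[|[|[|[|k]]]]]] hk] //=; lia)).
split; lia.
Qed.

Lemma cnt (key : pt -> int) (c : seq pt) (lo hi : int) :
  (forall x y, diag_lt x y -> key x < key y) -> sorted diag_lt c ->
  (forall w : pt, w \in c -> lo <= key w /\ key w <= hi) -> lo <= hi + 1 ->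
  (size c)%:Z <= hi - lo + 1.
Proof.
move=> hk hs hw hlh.
have := chain_count hk hs (lo := lo) (hi := hi).
have H : forall w : pt, w \in c -> lo <= key w <= hi by move=> w /hw [? ?]; apply/andP.
by move=> /(_ H) /orP[/eqP ->|]; lia.
Qed.

Lemma chain_at (Dp : pt -> Prop) (c : seq pt) (x : pt) (n1 n2 : int) :
  sorted diag_lt c -> (forall w : pt, w \in c -> Dp w) -> x \in c ->
  (forall c1 : seq pt, sorted diag_lt c1 -> (forall y : pt, y \in c1 -> Dp y /\ diag_lt y x) -> (size c1)%:Z <= n1) ->
  (forall c2 : seq pt, sorted diag_lt c2 -> (forall y : pt, y \in c2 -> Dp y /\ diag_lt x y) -> (size c2)%:Z <= n2) ->
  (size c <= absz (n1 + n2 + 1)%R)%N.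
Proof.
move=> hs hD hx h1 h2.
have [c1 [c2 [hc s1 s2 a1 a2]]] := chain_split hs hx.
have := h1 c1 s1 (fun y hy => conj (hD y (ltac:(by rewrite hc mem_cat hy))) (a1 y hy)).
have := h2 c2 s2 (fun y hy => conj (hD y (ltac:(by rewrite hc mem_cat inE hy !orbT))) (a2 y hy)).
rewrite hc size_cat /=; lia.
Qed.

Lemma sorted_map_iota (f : nat -> pt) m n : (forall k, diag_lt (f k) (f k.+1)) ->
  sorted diag_lt (map f (iota m n)).
Proof.
move=> hf; case: n => [//|n] /=.
elim: n m => [//|n IH] m /=.
by rewrite hf IH.
Qed.

Lemma G_of_seq D (f : nat -> pt) (p : nat) (v : pt) : (forall k, diag_lt (f k) (f k.+1)) ->
  (forall k, (1 <= k <= p)%N -> D (f k) /\ ((f k).1 <= v.1 /\ (f k).2 <= v.2)) -> G D p v.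
Proof.
move=> hf hk; exists (map f (iota 1 p)); split.
- move=> w /mapP [k hk' ->]; apply: hk; move: hk'; rewrite mem_iota; lia.
- exact: sorted_map_iota.
- by rewrite size_map size_iota.
Qed.

Lemma chains_split_virtual (D C V : pt -> Prop) u :
  (forall w, D w -> C w \/ V w) -> chains_le C u ->
  (forall (c : seq pt) (x : pt), sorted diag_lt c -> (forall w : pt, w \in c -> D w) -> x \in c -> V x ->
     (size c <= u)%N) ->
  chains_le D u.
Proof.
move=> hD hC hV c [hcD hs].
case: (classic (exists2 x, x \in c & V x)) => [[x hx hVx]|hn].
  exact: hV hs hcD hx hVx.
apply: hC; split=> // w hw; case: (hD w (hcD w hw)) => // hVw.
by exfalso; apply: hn; exists w.
Qed.

Lemma part_i_suff a b u (C : pt -> Prop) : (0 < u)%N -> (u <= minn a b)%N ->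
  (forall v, C v -> in_hexagon a b u v) -> chains_le C u ->
  exists H, path_family u (hexX a u) (hexY b u) H /\ covers u H C.
Proof.
move=> hu hm hCh hch.
have hma : (u <= a)%N by move: hm; rewrite leq_min => /andP[].
have hmb : (u <= b)%N by move: hm; rewrite leq_min => /andP[].
pose V := fun w : pt => (exists2 p, (1 <= p <= u)%N & w = hexX a u p) \/
                        (exists2 p, (1 <= p <= u)%N & w = hexY b u p).
pose D := fun w : pt => C w \/ V w.
have hCb : forall w : pt, C w -> [/\ 1 <= w.1 <= a%:Z, 1 <= w.2 <= b%:Z,
    w.1 - w.2 <= a%:Z - u%:Z & w.2 - w.1 <= b%:Z - u%:Z].
  by move=> w hw; apply: hex_ineq => //; apply: hCh.
have hDb : forall w : pt, D w -> 1 <= w.1 /\ w.1 <= a%:Z /\ 1 <= w.2 /\ w.2 <= b%:Z.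
  move=> w [/hCb [/andP[? ?] /andP[? ?] _ _]|[[p hp ->]|[p hp ->]]]; rewrite /= ; lia.
apply: (core (D := D) (L := 1)).
- by move=> v hv; left.
- apply: (chains_split_virtual (C := C) (V := V)) => // c x hs hcD hx hVx.
  case: hVx hx => [[p hp ->]|[p hp ->]] hx.
  + have := chain_at (n1 := p%:Z - 1) (n2 := u%:Z - p%:Z) hs hcD hx.
    move=> /(_ _ _) H; apply: leq_trans (H _ _) _.
    * move=> c1 s1 h1; suff: (size c1)%:Z <= p%:Z - 1 - 1 + 1 by lia.
      apply: (cnt key2 s1); last by lia.
      move=> w /h1 [/hDb ? /andP[_ ?]]; simpl in *; lia.
    * move=> c2 s2 h2; suff: (size c2)%:Z <= a%:Z - (a%:Z - u%:Z + p%:Z + 1) + 1 by lia.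
      apply: (cnt key1 s2); last by lia.
      move=> w /h2 [/hDb ? /andP[? _]]; simpl in *; lia.
    * lia.
  + have := chain_at (n1 := p%:Z - 1) (n2 := u%:Z - p%:Z) hs hcD hx.
    move=> /(_ _ _) H; apply: leq_trans (H _ _) _.
    * move=> c1 s1 h1; suff: (size c1)%:Z <= p%:Z - 1 - 1 + 1 by lia.
      apply: (cnt key1 s1); last by lia.
      move=> w /h1 [/hDb ? /andP[? _]]; simpl in *; lia.
    * move=> c2 s2 h2; suff: (size c2)%:Z <= b%:Z - (b%:Z - u%:Z + p%:Z + 1) + 1 by lia.
      apply: (cnt key2 s2); last by lia.
      move=> w /h2 [/hDb ? /andP[_ ?]]; simpl in *; lia.
    * lia.
- by move=> w /hDb [? _].
- move=> p hp; have hp0 : (0 < p)%N by case/andP: hp.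
  split.
  + apply: (G_of_seq (f := hexX a u)) => [k|k hk]; first by rewrite /diag_lt /=; apply/andP; split; lia.
    split; [by rewrite /D /V; right; left; exists k; [move: hk hp; lia|]|rewrite /=; lia].
  + move=> hG; have := G_count key2 hp0 hG (lo := 1) (hi := p%:Z - 1).
    have HH : forall w : pt, D w -> w.1 <= ((hexX a u p).1 - 1, (hexX a u p).2 - 1).1 ->
      w.2 <= ((hexX a u p).1 - 1, (hexX a u p).2 - 1).2 -> 1 <= w.2 <= p%:Z - 1.
      by move=> w /hDb ? ? ?; simpl in *; apply/andP; split; lia.
    by move=> /(_ HH); lia.
  + apply: (G_of_seq (f := hexY b u)) => [k|k hk]; first by rewrite /diag_lt /=; apply/andP; split; lia.
    split; [by rewrite /D /V; right; right; exists k; [move: hk hp; lia|]|rewrite /=; lia].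
  + move=> hG; have := G_count key1 hp0 hG (lo := 1) (hi := p%:Z - 1).
    have HH : forall w : pt, D w -> w.1 <= ((hexY b u p).1 - 1, (hexY b u p).2 - 1).1 ->
      w.2 <= ((hexY b u p).1 - 1, (hexY b u p).2 - 1).2 -> 1 <= w.1 <= p%:Z - 1.
      by move=> w /hDb ? ? ?; simpl in *; apply/andP; split; lia.
    by move=> /(_ HH); lia.
  + rewrite /=; split; lia.
- move=> c p hc hp [hG hnG]; have hp0 : (0 < p)%N by case/andP: hp.
  have [/andP[c1 c2] /andP[c3 c4] c5 c6] := hCb c hc.
  split; rewrite /=.
  + have := G_count key2 hp0 hG (lo := 1) (hi := c.2).
    have HH : forall w : pt, D w -> w.1 <= c.1 -> w.2 <= c.2 -> 1 <= w.2 <= c.2.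
      by move=> w /hDb ? ? ?; apply/andP; split; lia.
    by move=> /(_ HH); lia.
  + case: (lerP c.2 (b%:Z - u%:Z + p%:Z)) => // hlt; exfalso; apply: hnG.
    have hY : G D p (hexY b u p).
      apply: (G_of_seq (f := hexY b u)) => [k|k hk]; first by rewrite /diag_lt /=; apply/andP; split; lia.
      split; [by rewrite /D /V; right; right; exists k; [move: hk hp; lia|]|rewrite /=; lia].
    by apply: G_mono hY _ _ => /=; lia.
  + by move=> e; lia.
  + by move=> e; lia.
Qed.

Lemma part_ii_suff a b u (C : pt -> Prop) : (0 < u)%N -> (u < a)%N -> (u <= b)%N ->
  (forall v, C v -> in_grid a b v) -> chains_le C u ->
  exists H, path_family u (rowSW a u) (rowNE b) H /\ covers u H C.
Proof.
move=> hu hua hub hCg hch.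
pose Z := fun k : nat => ((a%:Z - u%:Z + k%:Z, k%:Z - u%:Z) : pt).
pose W := fun k : nat => ((k%:Z, b%:Z - u%:Z + k%:Z) : pt).
pose V := fun w : pt => (exists2 p, (1 <= p <= u)%N & w = Z p) \/
                        (exists2 p, (1 <= p <= u)%N & w = W p).
pose D := fun w : pt => C w \/ V w.
have hDb : forall w : pt, D w -> [/\ 1 <= w.1, w.1 <= a%:Z, w.2 <= b%:Z & (w.2 <= 0 -> a%:Z - u%:Z + 1 <= w.1)].
  move=> w [/hCg [/andP[? ?] /andP[? ?]]|[[p hp ->]|[p hp ->]]]; rewrite /=; split; lia.
have hZ : forall k, diag_lt (Z k) (Z k.+1) by move=> k; rewrite /diag_lt /=; apply/andP; split; lia.
have hW : forall k, diag_lt (W k) (W k.+1) by move=> k; rewrite /diag_lt /=; apply/andP; split; lia.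
have GZ : forall p, (1 <= p <= u)%N -> G D p (a%:Z - u%:Z + p%:Z, 0).
  move=> p hp; apply: (G_of_seq (f := Z)) => // k hk.
  split; [by rewrite /D /V; right; left; exists k; [move: hk hp; lia|]|rewrite /=; lia].
apply: (core (D := D) (L := 1)).
- by move=> v hv; left.
- apply: (chains_split_virtual (C := C) (V := V)) => // c x hs hcD hx hVx.
  case: hVx hx => [[p hp ->]|[p hp ->]] hx.
  + have := chain_at (n1 := p%:Z - 1) (n2 := u%:Z - p%:Z) hs hcD hx.
    move=> /(_ _ _) H; apply: leq_trans (H _ _) _.
    * move=> c1 s1 h1; suff: (size c1)%:Z <= (a%:Z - u%:Z + p%:Z - 1) - (a%:Z - u%:Z + 1) + 1 by lia.
      apply: (cnt key1 s1); last by lia.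
      move=> w /h1 [/hDb [? ? ? hz] /andP[? ?]]; simpl in *; have := hz (ltac:(lia)); lia.
    * move=> c2 s2 h2; suff: (size c2)%:Z <= a%:Z - (a%:Z - u%:Z + p%:Z + 1) + 1 by lia.
      apply: (cnt key1 s2); last by lia.
      move=> w /h2 [/hDb [? ? ? _] /andP[? _]]; simpl in *; lia.
    * lia.
  + have := chain_at (n1 := p%:Z - 1) (n2 := u%:Z - p%:Z) hs hcD hx.
    move=> /(_ _ _) H; apply: leq_trans (H _ _) _.
    * move=> c1 s1 h1; suff: (size c1)%:Z <= p%:Z - 1 - 1 + 1 by lia.
      apply: (cnt key1 s1); last by lia.
      move=> w /h1 [/hDb [? ? ? _] /andP[? _]]; simpl in *; lia.
    * move=> c2 s2 h2; suff: (size c2)%:Z <= b%:Z - (b%:Z - u%:Z + p%:Z + 1) + 1 by lia.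
      apply: (cnt key2 s2); last by lia.
      move=> w /h2 [/hDb [? ? ? _] /andP[_ ?]]; simpl in *; lia.
    * lia.
- by move=> w /hDb [].
- move=> p hp; have hp0 : (0 < p)%N by case/andP: hp.
  split.
  + by apply: G_mono (GZ p hp) _ _ => /=; lia.
  + move=> hG; have := G_count key1 hp0 hG (lo := a%:Z - u%:Z + 1) (hi := a%:Z - u%:Z + p%:Z - 1).
    have HH : forall w : pt, D w -> w.1 <= ((rowSW a u p).1 - 1, (rowSW a u p).2 - 1).1 ->
      w.2 <= ((rowSW a u p).1 - 1, (rowSW a u p).2 - 1).2 -> a%:Z - u%:Z + 1 <= w.1 <= a%:Z - u%:Z + p%:Z - 1.
      move=> w /hDb [? ? ? hz] ? ?; simpl in *; apply/andP; split; last lia.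
      by apply: hz; lia.
    by move=> /(_ HH); lia.
  + apply: (G_of_seq (f := W)) => // k hk.
    split; [by rewrite /D /V; right; right; exists k; [move: hk hp; lia|]|rewrite /=; lia].
  + move=> hG; have := G_count key1 hp0 hG (lo := 1) (hi := p%:Z - 1).
    have HH : forall w : pt, D w -> w.1 <= ((rowNE b p).1 - 1, (rowNE b p).2 - 1).1 ->
      w.2 <= ((rowNE b p).1 - 1, (rowNE b p).2 - 1).2 -> 1 <= w.1 <= p%:Z - 1.
      by move=> w /hDb [? ? ? _] ? ?; simpl in *; apply/andP; split; lia.
    by move=> /(_ HH); lia.
  + rewrite /=; split; lia.
- move=> c p hc hp [hG hnG]; have hp0 : (0 < p)%N by case/andP: hp.
  have [/andP[c1 c2] /andP[c3 c4]] := hCg c hc.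
  split; rewrite /=.
  + lia.
  + lia.
  + move=> e; case: (lerP c.1 (a%:Z - u%:Z + p%:Z)) => // hlt; exfalso; apply: hnG.
    by apply: G_mono (GZ p hp) _ _ => /=; lia.
  + move=> e; have := G_count key1 hp0 hG (lo := 1) (hi := c.1).
    have HH : forall w : pt, D w -> w.1 <= c.1 -> w.2 <= c.2 -> 1 <= w.1 <= c.1.
      by move=> w /hDb [? ? ? _] ? ?; apply/andP; split; lia.
    by move=> /(_ HH); lia.
Qed.

Lemma part_iip_suff a b u (C : pt -> Prop) : (0 < u)%N -> (u < b)%N -> (u <= a)%N ->
  (forall v, C v -> in_grid a b v) -> chains_le C u ->
  exists H, path_family u (colSW a) (colNE b u) H /\ covers u H C.
Proof.
move=> hu hub hua hCg hch.
pose P := fun k : nat => ((a%:Z - u%:Z + k%:Z, k%:Z) : pt).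
pose Z := fun k : nat => ((k%:Z - u%:Z, b%:Z - u%:Z + k%:Z) : pt).
pose V := fun w : pt => (exists2 p, (1 <= p <= u)%N & w = P p) \/
                        (exists2 p, (1 <= p <= u)%N & w = Z p).
pose D := fun w : pt => C w \/ V w.
have hDb : forall w : pt, D w -> [/\ 1 - u%:Z <= w.1, w.1 <= a%:Z, 1 <= w.2, w.2 <= b%:Z & (w.1 <= 0 -> b%:Z - u%:Z + 1 <= w.2)].
  move=> w [/hCg [/andP[? ?] /andP[? ?]]|[[p hp ->]|[p hp ->]]]; rewrite /=; split; lia.
have hP : forall k, diag_lt (P k) (P k.+1) by move=> k; rewrite /diag_lt /=; apply/andP; split; lia.
have hZ : forall k, diag_lt (Z k) (Z k.+1) by move=> k; rewrite /diag_lt /=; apply/andP; split; lia.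
have GZ : forall p, (1 <= p <= u)%N -> G D p (0, b%:Z - u%:Z + p%:Z).
  move=> p hp; apply: (G_of_seq (f := Z)) => // k hk.
  split; [by rewrite /D /V; right; right; exists k; [move: hk hp; lia|]|rewrite /=; lia].
apply: (core (D := D) (L := 1 - u%:Z)).
- by move=> v hv; left.
- apply: (chains_split_virtual (C := C) (V := V)) => // c x hs hcD hx hVx.
  case: hVx hx => [[p hp ->]|[p hp ->]] hx.
  + have := chain_at (n1 := p%:Z - 1) (n2 := u%:Z - p%:Z) hs hcD hx.
    move=> /(_ _ _) H; apply: leq_trans (H _ _) _.
    * move=> c1 s1 h1; suff: (size c1)%:Z <= p%:Z - 1 - 1 + 1 by lia.
      apply: (cnt key2 s1); last by lia.
      move=> w /h1 [/hDb [? ? ? ? _] /andP[_ ?]]; simpl in *; lia.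
    * move=> c2 s2 h2; suff: (size c2)%:Z <= a%:Z - (a%:Z - u%:Z + p%:Z + 1) + 1 by lia.
      apply: (cnt key1 s2); last by lia.
      move=> w /h2 [/hDb [? ? ? ? _] /andP[? _]]; simpl in *; lia.
    * lia.
  + have := chain_at (n1 := p%:Z - 1) (n2 := u%:Z - p%:Z) hs hcD hx.
    move=> /(_ _ _) H; apply: leq_trans (H _ _) _.
    * move=> c1 s1 h1; suff: (size c1)%:Z <= (p%:Z - u%:Z - 1) - (1 - u%:Z) + 1 by lia.
      apply: (cnt key1 s1); last by lia.
      move=> w /h1 [/hDb [? ? ? ? _] /andP[? _]]; simpl in *; lia.
    * move=> c2 s2 h2; suff: (size c2)%:Z <= b%:Z - (b%:Z - u%:Z + p%:Z + 1) + 1 by lia.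
      apply: (cnt key2 s2); last by lia.
      move=> w /h2 [/hDb [? ? ? ? _] /andP[_ ?]]; simpl in *; lia.
    * lia.
- by move=> w /hDb [].
- move=> p hp; have hp0 : (0 < p)%N by case/andP: hp.
  split.
  + apply: (G_of_seq (f := P)) => // k hk.
    split; [by rewrite /D /V; right; left; exists k; [move: hk hp; lia|]|rewrite /=; lia].
  + move=> hG; have := G_count key2 hp0 hG (lo := 1) (hi := p%:Z - 1).
    have HH : forall w : pt, D w -> w.1 <= ((colSW a p).1 - 1, (colSW a p).2 - 1).1 ->
      w.2 <= ((colSW a p).1 - 1, (colSW a p).2 - 1).2 -> 1 <= w.2 <= p%:Z - 1.
      by move=> w /hDb [? ? ? ? _] ? ?; simpl in *; apply/andP; split; lia.
    by move=> /(_ HH); lia.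
  + by apply: G_mono (GZ p hp) _ _ => /=; lia.
  + move=> hG; have := G_count key2 hp0 hG (lo := b%:Z - u%:Z + 1) (hi := b%:Z - u%:Z + p%:Z - 1).
    have HH : forall w : pt, D w -> w.1 <= ((colNE b u p).1 - 1, (colNE b u p).2 - 1).1 ->
      w.2 <= ((colNE b u p).1 - 1, (colNE b u p).2 - 1).2 -> b%:Z - u%:Z + 1 <= w.2 <= b%:Z - u%:Z + p%:Z - 1.
      move=> w /hDb [? ? ? ? hz] ? ?; simpl in *; apply/andP; split; last lia.
      by apply: hz; lia.
    by move=> /(_ HH); lia.
  + rewrite /=; split; lia.
- move=> c p hc hp [hG hnG]; have hp0 : (0 < p)%N by case/andP: hp.
  have [/andP[c1 c2] /andP[c3 c4]] := hCg c hc.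
  split; rewrite /=.
  + have := G_count key2 hp0 hG (lo := 1) (hi := c.2).
    have HH : forall w : pt, D w -> w.1 <= c.1 -> w.2 <= c.2 -> 1 <= w.2 <= c.2.
      by move=> w /hDb [? ? ? ? _] ? ?; apply/andP; split; lia.
    by move=> /(_ HH); lia.
  + case: (lerP c.2 (b%:Z - u%:Z + p%:Z)) => // hlt; exfalso; apply: hnG.
    by apply: G_mono (GZ p hp) _ _ => /=; lia.
  + move=> e; lia.
  + move=> e; lia.
Qed.

Lemma lstepE (x y : pt) : lstep x y ->
  (y.1 = x.1 /\ y.2 = x.2 + 1) \/ (y.1 = x.1 - 1 /\ y.2 = x.2).
Proof. by rewrite /lstep => /orP[] /eqP ->; [left|right]. Qed.

Lemma path_unique x r r' (e : pt) : path lstep x r -> path lstep x r' ->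
  last x r = e -> last x r' = e -> (x.1 = e.1 \/ x.2 = e.2) -> r = r'.
Proof.
elim: r x r' => [|y r IH] x [|z r'] //= hp hp' hl hl' hxe.
- case/andP: hp' => hxz hp'.
  have := path_reach_last hp' (mem_head _ _); rewrite hl' -hl /reach.
  case: (lstepE hxz); lia.
- case/andP: hp => hxy hp.
  have := path_reach_last hp (mem_head _ _); rewrite hl -hl' /reach.
  case: (lstepE hxy); lia.
- case/andP: hp => hxy hp; case/andP: hp' => hxz hp'.
  have := path_reach_last hp (mem_head _ _); rewrite hl /reach => hy.
  have := path_reach_last hp' (mem_head _ _); rewrite hl' /reach => hz.
  have eyz : y = z.
    case: y z hxy hxz hy hz {hp hp' hl hl' IH} => [y1 y2] [z1 z2] hxy hxz hy hz.
    case: (lstepE hxy); case: (lstepE hxz); simpl in *; move=> [? ?] [? ?];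
      congr pair; lia.
  subst z; congr cons; apply: IH hp hp' hl hl' _.
  case: (lstepE hxy); lia.
Qed.

Lemma lpath_unique sw ne P Q : lpath sw ne P -> lpath sw ne Q ->
  (sw.1 = ne.1 \/ sw.2 = ne.2) -> P = Q.
Proof.
case: P => [//|x r]; case: Q => [//|y r'] /= /and3P[/eqP hx hp /eqP hl] /and3P[/eqP hy hp' /eqP hl'] h.
subst x y; congr cons; exact: path_unique hp hp' hl hl' h.
Qed.

Definition lineF (f : nat -> pt) (n : nat) : seq pt := map f (iota 0 n.+1).

Lemma lineF_path (f : nat -> pt) n m : (forall k, lstep (f k) (f k.+1)) ->
  path lstep (f m) (map f (iota m.+1 n)) /\ last (f m) (map f (iota m.+1 n)) = f (m + n)%N.
Proof.
move=> hf; elim: n m => [|n IH] m /=; first by rewrite addn0.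
have [h1 h2] := IH m.+1; rewrite hf h1 h2 addSnnS; split=> //.
Qed.

Lemma lineF_lpath (f : nat -> pt) n sw ne : (forall k, lstep (f k) (f k.+1)) ->
  f 0%N = sw -> f n = ne -> lpath sw ne (lineF f n).
Proof.
move=> hf h0 hn; rewrite /lineF /=; have [h1 h2] := lineF_path n 0 hf.
rewrite add0n hn in h2; rewrite h1 h2 h0 !eqxx //.
Qed.

Lemma path_same (key : pt -> int) x (s : seq pt) : (forall y : pt, y \in s -> key y = key x) ->
  path (fun v w : pt => key v == key w) x s.
Proof.
elim: s x => [//|y s IH] x hs /=.
have hy := hs y (mem_head _ _); rewrite hy eqxx /=; apply: IH => z hz.
by rewrite (hs z _) ?hy // inE hz orbT.
Qed.

Lemma part_ii_nec a b u H : (0 < u)%N -> (u < a)%N ->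
  path_family u (rowSW a u) (rowNE b) H -> (u <= b)%N.
Proof.
move=> hu hua hf; case: (leqP u b) => // hbu; exfalso.
have hf' := hf; case: hf' => hl _.
have : (minn u (a + b - u) <= b)%N.
  apply: (@line_pigeon u (rowSW a u) (rowNE b) H (minn u (a + b - u)) (a%:Z - u%:Z) snd 1 b hf).
  - by rewrite geq_minl.
  - move=> p hp; rewrite /=; split; lia.
  - move=> p v hp hv; have hpu : (1 <= p <= u)%N by move: hp; lia.
    have [_ _ h1 h2] := lpath_box (hl p hpu) hv; simpl in *; split; lia.
  - move=> [v1 v2] [w1 w2] /= h1 h2; congr pair; lia.
lia.
Qed.

Lemma part_iip_nec a b u H : (0 < u)%N -> (u < b)%N ->
  path_family u (colSW a) (colNE b u) H -> (u <= a)%N.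
Proof.
move=> hu hub hf; case: (leqP u a) => // hau; exfalso.
have hf' := hf; case: hf' => hl _.
have : (minn u (a + b - u) <= a)%N.
  apply: (@line_pigeon u (colSW a) (colNE b u) H (minn u (a + b - u)) (u%:Z - b%:Z) fst 1 a hf).
  - by rewrite geq_minl.
  - move=> p hp; rewrite /=; split; lia.
  - move=> p v hp hv; have hpu : (1 <= p <= u)%N by move: hp; lia.
    have [h1 h2 _ _] := lpath_box (hl p hpu) hv; simpl in *; split; lia.
  - move=> [v1 v2] [w1 w2] /= h1 h2; congr pair; lia.
lia.
Qed.

Lemma part_ii_eq a b u (C : pt -> Prop) : (0 < b)%N -> (0 < u)%N ->
  (forall v, C v -> in_grid a b v) -> u = a ->
  exists H, (path_family u (rowSW a u) (rowNE b) H /\ covers u H C) /\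
        (forall H', path_family u (rowSW a u) (rowNE b) H' /\ covers u H' C ->
           forall p, (1 <= p <= u)%N -> H' p = H p) /\
        (forall p, (1 <= p <= u)%N -> straight_horizontal (H p)).
Proof.
move=> hb hu hCg hua.
pose f := fun (p : nat) (k : nat) => ((p%:Z, 1 + k%:Z) : pt).
have hfs : forall p k, lstep (f p k) (f p k.+1).
  by move=> p k; rewrite /lstep /f /=; apply/orP; left; apply/eqP; congr pair; lia.
have hlp : forall p, lpath (rowSW a u p) (rowNE b p) (lineF (f p) b.-1).
  move=> p; apply: lineF_lpath => //; rewrite /f /rowSW /rowNE; congr pair; lia.
exists (fun p => lineF (f p) b.-1); split; [split; [split|]|split].
- by move=> p _; apply: hlp.
- move=> p q _ _ hpq v /mapP [k _ ->] /mapP [k' _ /(congr1 fst)] /= e.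
  by apply: hpq; lia.
- move=> v /hCg [/andP[h1 h2] /andP[h3 h4]].
  exists (absz v.1); first lia.
  apply/mapP; exists (absz (v.2 - 1)%R); first by rewrite mem_iota; lia.
  by rewrite /f [LHS]surjective_pairing; congr pair; lia.
- move=> H' [[hl' _] _] p hp; apply: lpath_unique (hl' p hp) (hlp p) _.
  by left; rewrite /=; lia.
- move=> p hp; rewrite /lineF /=; apply: (path_same (key := fst)) => y /mapP [k _ ->] //.
Qed.

Lemma part_iip_eq a b u (C : pt -> Prop) : (0 < a)%N -> (0 < u)%N ->
  (forall v, C v -> in_grid a b v) -> u = b ->
  exists H, (path_family u (colSW a) (colNE b u) H /\ covers u H C) /\
        (forall H', path_family u (colSW a) (colNE b u) H' /\ covers u H' C ->
           forall p, (1 <= p <= u)%N -> H' p = H p) /\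
        (forall p, (1 <= p <= u)%N -> straight_vertical (H p)).
Proof.
move=> ha hu hCg hub.
pose f := fun (p : nat) (k : nat) => ((a%:Z - k%:Z, p%:Z) : pt).
have hfs : forall p k, lstep (f p k) (f p k.+1).
  by move=> p k; rewrite /lstep /f /=; apply/orP; right; apply/eqP; congr pair; lia.
have hlp : forall p, lpath (colSW a p) (colNE b u p) (lineF (f p) a.-1).
  move=> p; apply: lineF_lpath => //; rewrite /f /colSW /colNE; congr pair; lia.
exists (fun p => lineF (f p) a.-1); split; [split; [split|]|split].
- by move=> p _; apply: hlp.
- move=> p q _ _ hpq v /mapP [k _ ->] /mapP [k' _ /(congr1 snd)] /= e.
  by apply: hpq; lia.
- move=> v /hCg [/andP[h1 h2] /andP[h3 h4]].
  exists (absz v.2); first lia.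
  apply/mapP; exists (absz (a%:Z - v.1)%R); first by rewrite mem_iota; lia.
  by rewrite /f [LHS]surjective_pairing; congr pair; lia.
- move=> H' [[hl' _] _] p hp; apply: lpath_unique (hl' p hp) (hlp p) _.
  by right; rewrite /=; lia.
- move=> p hp; rewrite /lineF /=; apply: (path_same (key := snd)) => y /mapP [k _ ->] //.
Qed.

Local Close Scope ring_scope.
Unset Implicit Arguments.

Theorem lemma2p6 (a b u : nat) :
  (0 < a)%N -> (0 < b)%N -> (0 < u)%N ->
  (* (i) *)
  ((u <= minn a b)%N ->
    forall C : pt -> Prop, (forall v, C v -> in_hexagon a b u v) ->
      ((exists H, path_family u (hexX a u) (hexY b u) H /\ covers u H C)
        <-> chains_le C u))
  /\
  (* (ii) *)
  (forall C : pt -> Prop, (forall v, C v -> in_grid a b v) ->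
    ((u < a)%N ->
      ((exists H, path_family u (rowSW a u) (rowNE b) H /\ covers u H C)
        <-> ((u <= b)%N /\ chains_le C u)))
    /\
    (u = a ->
      exists H, (path_family u (rowSW a u) (rowNE b) H /\ covers u H C) /\
        (forall H', path_family u (rowSW a u) (rowNE b) H' /\ covers u H' C ->
           forall p, (1 <= p <= u)%N -> H' p = H p) /\
        (forall p, (1 <= p <= u)%N -> straight_horizontal (H p))))
  /\
  (* (ii') *)
  (forall C : pt -> Prop, (forall v, C v -> in_grid a b v) ->
    ((u < b)%N ->
      ((exists H, path_family u (colSW a) (colNE b u) H /\ covers u H C)
        <-> ((u <= a)%N /\ chains_le C u)))
    /\
    (u = b ->
      exists H, (path_family u (colSW a) (colNE b u) H /\ covers u H C) /\
        (forall H', path_family u (colSW a) (colNE b u) H' /\ covers u H' C ->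
           forall p, (1 <= p <= u)%N -> H' p = H p) /\
        (forall p, (1 <= p <= u)%N -> straight_vertical (H p)))).
Proof.
move=> ha hb hu; split; [|split].
- move=> hm C hC; split.
  + by move=> [H [hf hc]]; apply: chains_nec hf hc.
  + by move=> hch; apply: part_i_suff.
- move=> C hC; split.
  + move=> hua; split.
    * move=> [H [hf hc]]; split; [exact: part_ii_nec hu hua hf|exact: chains_nec hf hc].
    * by move=> [hub hch]; apply: part_ii_suff.
  + by move=> e; apply: part_ii_eq.
- move=> C hC; split.
  + move=> hub; split.
    * move=> [H [hf hc]]; split; [exact: part_iip_nec hu hub hf|exact: chains_nec hf hc].
    * by move=> [hua hch]; apply: part_iip_suff.
  + by move=> e; apply: part_iip_eq.
Qed.
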